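(* Let $a=(a_n)_{n\ge1}$ be a real sequence with $\sum_{n=1}^\infty|a_n|<\infty$, and define $$(\tilde{\Gamma}a)_n=\frac{1}{n}\sum_{k=1}^n a_k-\frac{1}{n+1}\sum_{k=1}^\infty a_k,\qquad n\ge1.$$ If $\sum_{k=1}^\infty |a_k|\ln(k+1)<\infty$, then $\sum_{n=1}^\infty|(\tilde{\Gamma}a)_n|<\infty$. Conversely, if $a_n>0$ for all $n$ and $\sum_{n=1}^\infty|(\tilde{\Gamma}a)_n|<\infty$, then $\sum_{k=1}^\infty a_k\ln(k+1)<\infty$. *)

(* Defs.v *)
From Stdlib Require Import Reals.
From Coquelicot Require Import Coquelicot.
Open Scope R_scope.

(* A real sequence (a_n)_{n>=1} is modelled as a : nat -> R; the value a 0 is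
   irrelevant (never used).  sum_{k=1}^{oo} b_k converges absolutely is
   ex_series (fun j => Rabs (b (S j))). *)

Definition psum1 (a : nat -> R) (n : nat) : R :=
  match n with
  | O => 0
  | S m => sum_n (fun j => a (S j)) m
  end.

Definition fsum1 (a : nat -> R) : R := Series (fun j => a (S j)).

Definition GammaT (a : nat -> R) (n : nat) : R :=
  psum1 a n / INR n - fsum1 a / INR (S n).

(* Main.v *)
Require Import Defs.
From Stdlib Require Import Reals Lra Lia.
From Coquelicot Require Import Coquelicot.
Open Scope R_scope.

Fixpoint Hs (k : nat) : R := match k with O => 0 | S m => Hs m + / INR (S m) end.

Lemma INR_S_pos n : 0 < INR (S n).
Proof. rewrite S_INR; pose proof (pos_INR n); lra. Qed.

Lemma ln_1px x : -1 < x -> ln (1 + x) <= x.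
Proof. intros. rewrite <- (ln_exp x) at 2. apply ln_le; [lra|apply exp_ineq1_le]. Qed.

Lemma Hs_ge_ln k : ln (INR k + 1) <= Hs k.
Proof.
  induction k as [|k IH].
  - simpl. replace (0+1) with 1 by lra. rewrite ln_1; lra.
  - change (Hs (S k)) with (Hs k + / INR (S k)). pose proof (pos_INR k) as Hk. rewrite S_INR.
    replace (INR k + 1 + 1) with ((INR k + 1) * (1 + / (INR k + 1))) by (field; lra).
    assert (0 < / (INR k + 1)) by (apply Rinv_0_lt_compat; lra).
    rewrite ln_mult by lra.
    pose proof (ln_1px (/ (INR k + 1))).
    lra.
Qed.

Lemma Hs_le_ln k : Hs (S k) - 1 <= ln (INR (S k)).
Proof.
  induction k as [|k IH].
  - simpl. replace (0 + /1 - 1) with 0 by (field). rewrite ln_1; lra.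
  - change (Hs (S (S k))) with (Hs (S k) + / INR (S (S k))).
    pose proof (pos_INR k) as Hk. rewrite !S_INR in *.
    assert (Hr: 0 < / (INR k + 1 + 1) < 1). { split. apply Rinv_0_lt_compat; lra. rewrite <- Rinv_1. apply Rinv_lt_contravar; lra. }
    assert (E: ln (INR k + 1) = ln (INR k + 1 + 1) + ln (1 + - / (INR k + 1 + 1))).
    { rewrite <- ln_mult by lra. f_equal. field. lra. }
    pose proof (ln_1px (- / (INR k + 1 + 1))).
    lra.
Qed.

Lemma Hs_mono m n : (m <= n)%nat -> Hs m <= Hs n.
Proof.
  induction 1; [lra|]. change (Hs (S m0)) with (Hs m0 + / INR (S m0)). pose proof (Rinv_0_lt_compat _ (INR_S_pos m0)). lra.
Qed.

Lemma Hs_S0_ge1 n : 1 <= Hs (S n).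
Proof. pose proof (Hs_mono 1 (S n)). simpl in H. replace (0 + /1) with 1 in H by field. apply H; lia. Qed.

Lemma mono_bounded (f : nat -> R) (M : R) :
  (forall n, 0 <= f n) -> (forall n, sum_f_R0 f n <= M) -> ex_series f.
Proof.
  intros Hf HM.
  destruct (ex_finite_lim_seq_incr (sum_n f) M) as [l Hl].
  - intros n. rewrite sum_Sn. change (plus (sum_n f n) (f (S n))) with (sum_n f n + f (S n)). specialize (Hf (S n)). lra.
  - intros n. rewrite sum_n_Reals. apply HM.
  - exists l. exact Hl.
Qed.

Lemma Series_nonneg (b : nat -> R) : (forall n, 0 <= b n) -> ex_series b -> 0 <= Series b.
Proof.
  intros Hb Ex. assert (Series (fun _ => 0) <= Series b) by (apply Series_le; [intros; split; [lra|apply Hb]|exact Ex]).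
  rewrite (Series_ext (fun _ => 0) (fun n => 0 * b n)) in H by (intros; lra).
  rewrite Series_scal_l in H. lra.
Qed.

Lemma partial_le (b : nat -> R) M : (forall n, 0 <= b n) -> ex_series b -> sum_f_R0 b M <= Series b.
Proof.
  intros Hb Ex. rewrite (Series_incr_n b (S M)) by (auto; lia). simpl pred.
  pose proof (Series_nonneg (fun k => b (S M + k)%nat)). 
  assert (0 <= Series (fun k => b (S M + k)%nat)); [|lra].
  apply H; [intros; apply Hb| apply (ex_series_incr_n b (S M)); exact Ex].
Qed.

Definition T (b : nat -> R) (n : nat) : R := Series (fun j => b (n + j)%nat).

Lemma T_step b n : ex_series b -> T b n = b n + T b (S n).
Proof.
  intros Ex. unfold T. rewrite Series_incr_1.
  - rewrite Nat.add_0_r. f_equal. apply Series_ext. intros; f_equal; lia.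
  - apply (ex_series_incr_n b n); exact Ex.
Qed.

Lemma F_identity (t b : nat -> R) :
  (forall N, t N = b N + t (S N)) -> forall M,
  sum_f_R0 (fun i => t (S i) / INR (S (S i))) M =
  t (S M) * (Hs (S (S M)) - 1) + sum_f_R0 (fun j => b j * (Hs (S j) - 1)) M.
Proof.
  intros Ht M. induction M as [|M IH].
  - simpl. field.
  - rewrite tech5, IH, tech5. rewrite (Ht (S M)).
    change (Hs (S (S (S M)))) with (Hs (S (S M)) + / INR (S (S (S M)))).
    field. pose proof (INR_S_pos (S (S M))). lra.
Qed.

Definition cw (b : nat -> R) j := b j * (Hs (S j) - 1).

Lemma T_nonneg b n : (forall n, 0 <= b n) -> ex_series b -> 0 <= T b n.
Proof. intros Hb Ex. apply Series_nonneg; [intros; apply Hb|apply (ex_series_incr_n b n); exact Ex]. Qed.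

Lemma upper b M : (forall n, 0 <= b n) -> ex_series b -> ex_series (cw b) ->
  sum_f_R0 (fun i => T b (S i) / INR (S (S i))) M <= Series (cw b).
Proof.
  intros Hb Ex Exc. rewrite (F_identity (T b) b) by (intros; apply T_step; exact Ex).
  rewrite (Series_incr_n (cw b) (S M)) by (auto; lia). simpl pred.
  assert (T b (S M) * (Hs (S (S M)) - 1) <= Series (fun k => cw b (S M + k)%nat)); [|unfold cw in *; lra].
  unfold T. rewrite Rmult_comm, <- Series_scal_l. apply Series_le.
  - intros k. pose proof (Hs_S0_ge1 (S M)). pose proof (Hb (S M + k)%nat). split.
    + apply Rmult_le_pos; lra.
    + unfold cw. rewrite Rmult_comm. apply Rmult_le_compat_l; [lra|].
      pose proof (Hs_mono (S (S M)) (S (S M + k))). assert ((S (S M) <= S (S M + k))%nat) by lia. specialize (H1 H2). lra.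
  - apply (ex_series_incr_n (cw b) (S M)); exact Exc.
Qed.

Lemma lower b M : (forall n, 0 <= b n) -> ex_series b ->
  sum_f_R0 (cw b) M <= sum_f_R0 (fun i => T b (S i) / INR (S (S i))) M.
Proof.
  intros Hb Ex. rewrite (F_identity (T b) b) by (intros; apply T_step; exact Ex).
  pose proof (T_nonneg b (S M) Hb Ex). pose proof (Hs_S0_ge1 (S M)).
  assert (0 <= T b (S M) * (Hs (S (S M)) - 1)) by (apply Rmult_le_pos; lra).
  unfold cw; lra.
Qed.

Lemma Gamma_decomp (a : nat -> R) i : ex_series (fun j => a (S j)) ->
  GammaT a (S i) = sum_f_R0 (fun j => a (S j)) i / (INR (S i) * INR (S (S i)))
                   - T (fun j => a (S j)) (S i) / INR (S (S i)).
Proof.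
  intros Ex. unfold GammaT, fsum1, psum1. rewrite sum_n_Reals.
  rewrite (Series_incr_n (fun j => a (S j)) (S i)) by (auto; lia). simpl pred. unfold T.
  pose proof (INR_S_pos i). pose proof (INR_S_pos (S i)). rewrite (S_INR (S i)) in *. field. lra.
Qed.

Lemma telesc M : sum_f_R0 (fun i => / (INR (S i) * INR (S (S i)))) M = 1 - / INR (S (S M)).
Proof.
  induction M as [|M IH].
  - simpl. field.
  - rewrite tech5, IH. pose proof (INR_S_pos (S M)). pose proof (INR_S_pos (S (S M))).
    rewrite (S_INR (S (S M))). rewrite (S_INR (S M)) in *. field. lra.
Qed.

Lemma abs_bound P t B U x y : 0 < x -> 0 < y -> Rabs P <= B -> Rabs t <= U ->
  Rabs (P / (x * y) - t / y) <= B / (x * y) + U / y.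
Proof.
  intros Hx Hy HP Ht. unfold Rminus. eapply Rle_trans; [apply Rabs_triang|].
  rewrite Rabs_Ropp. unfold Rdiv. rewrite !Rabs_mult.
  assert (Hxy: 0 < x * y) by (apply Rmult_lt_0_compat; lra).
  rewrite (Rabs_pos_eq (/ (x * y))) by (left; apply Rinv_0_lt_compat; lra).
  rewrite (Rabs_pos_eq (/ y)) by (left; apply Rinv_0_lt_compat; lra).
  apply Rplus_le_compat; apply Rmult_le_compat_r; try (left; apply Rinv_0_lt_compat; lra); lra.
Qed.

Lemma sum_scal_telesc B M : 0 <= B ->
  sum_f_R0 (fun i => B / (INR (S i) * INR (S (S i)))) M <= B.
Proof.
  intros HB. unfold Rdiv.
  rewrite (sum_eq _ (fun i => / (INR (S i) * INR (S (S i))) * B)) by (intros; ring).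
  rewrite <- scal_sum, telesc.
  assert (0 < / INR (S (S M))) by (apply Rinv_0_lt_compat, INR_S_pos). nra.
Qed.

Theorem theorem3p4 (a : nat -> R) :
  ex_series (fun j => Rabs (a (S j))) ->
  ((ex_series (fun j => Rabs (a (S j)) * ln (INR (S j) + 1)) ->
    ex_series (fun j => Rabs (GammaT a (S j))))
   /\
   ((forall n : nat, (1 <= n)%nat -> 0 < a n) ->
    ex_series (fun j => Rabs (GammaT a (S j))) ->
    ex_series (fun j => a (S j) * ln (INR (S j) + 1)))).
Proof.
  intros Exa.
  set (b := fun j => Rabs (a (S j))).
  assert (Hb : forall n, 0 <= b n) by (intros; apply Rabs_pos).
  assert (Exa' : ex_series (fun j => a (S j))) by (apply ex_series_Rabs; exact Exa).
  split.
  - intros HL.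
    assert (Exc : ex_series (cw b)).
    { apply (@ex_series_le R_AbsRing R_CompleteNormedModule _ (fun j => Rabs (a (S j)) * ln (INR (S j) + 1))); [|exact HL].
      intros j. change (norm (cw b j)) with (Rabs (cw b j)). unfold cw.
      pose proof (Hs_S0_ge1 j). pose proof (Hb j).
      rewrite Rabs_pos_eq by (apply Rmult_le_pos; lra).
      apply Rmult_le_compat_l; [exact (Hb j)|].
      eapply Rle_trans; [apply Hs_le_ln|]. apply ln_le; [apply INR_S_pos|lra]. }
    apply (mono_bounded _ (Series b + Series (cw b))).
    + intros; apply Rabs_pos.
    + intros M.
      eapply Rle_trans.
      { apply (sum_Rle _ (fun i => Series b / (INR (S i) * INR (S (S i))) + T b (S i) / INR (S (S i)))).
        intros i _. rewrite Gamma_decomp by exact Exa'.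
        apply abs_bound; try apply INR_S_pos.
        - eapply Rle_trans; [apply sum_f_R0_triangle|]. apply (partial_le b i Hb Exa).
        - unfold T. apply Series_Rabs. apply (ex_series_incr_n (fun j => Rabs (a (S j))) (S i)). exact Exa. }
      rewrite plus_sum. apply Rplus_le_compat.
      * apply sum_scal_telesc. apply Series_nonneg; assumption.
      * apply upper; assumption.
  - intros Hpos HG.
    set (b2 := fun j => a (S j)).
    assert (Hb2 : forall n, 0 <= b2 n) by (intros; unfold b2; left; apply Hpos; lia).
    assert (HF : forall M, sum_f_R0 (fun i => T b2 (S i) / INR (S (S i))) M
                           <= Series b2 + Series (fun j => Rabs (GammaT a (S j)))).
    { intros M. eapply Rle_trans.
      { apply (sum_Rle _ (fun i => Series b2 / (INR (S i) * INR (S (S i))) + Rabs (GammaT a (S i)))).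
        intros i _. pose proof (Gamma_decomp a i Exa') as E. fold b2 in E.
        pose proof (partial_le b2 i Hb2 Exa') as HP.
        pose proof (Rle_abs (- GammaT a (S i))) as HA. rewrite Rabs_Ropp in HA.
        assert (Hq: sum_f_R0 b2 i / (INR (S i) * INR (S (S i))) <= Series b2 / (INR (S i) * INR (S (S i)))).
        { apply Rmult_le_compat_r; [|exact HP]. left; apply Rinv_0_lt_compat, Rmult_lt_0_compat; apply INR_S_pos. }
        unfold b2 in *. lra. }
      rewrite plus_sum. apply Rplus_le_compat.
      * apply sum_scal_telesc. apply Series_nonneg; assumption.
      * apply (partial_le (fun j => Rabs (GammaT a (S j)))); [intros; apply Rabs_pos|exact HG]. }
    apply (mono_bounded _ (Series b2 + Series (fun j => Rabs (GammaT a (S j))) + Series b2)).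
    + intros n. apply Rmult_le_pos; [apply (Hb2 n)|].
      rewrite <- ln_1. apply ln_le; [lra|]. pose proof (pos_INR (S n)); lra.
    + intros M. eapply Rle_trans.
      { apply (sum_Rle _ (fun j => cw b2 j + b2 j)). intros j _. unfold cw, b2.
        replace (a (S j) * (Hs (S j) - 1) + a (S j)) with (a (S j) * Hs (S j)) by ring.
        apply Rmult_le_compat_l; [apply (Hb2 j)|]. apply Hs_ge_ln. }
      rewrite plus_sum. apply Rplus_le_compat.
      * eapply Rle_trans; [apply lower; assumption|apply HF].
      * apply partial_le; assumption.
Qed.
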